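(* Let $f,g:\mathbb{R}\to\mathbb{R}$ be $\mathcal{C}^2$ functions such that $f''(u)\ge c_0$ and $g''(u)\ge c_0$ for some $c_0>0$ and all $u\in\mathbb{R}$, and $f(u)>g(u)$ for all $u\in\mathbb{R}$. Let $u^->u^+$ and $\theta^-,\theta^+\in\{0,1\}$ with $\theta^-\neq\theta^+$, and let $$\lambda=\frac{[\theta^+f(u^+)+(1-\theta^+)g(u^+)]-[\theta^-f(u^-)+(1-\theta^-)g(u^-)]}{u^+-u^-}.$$ Then the jump satisfies the Lax admissibility conditions $$\theta^+f'(u^+)+(1-\theta^+)g'(u^+)\;\le\;\lambda\;\le\;\theta^-f'(u^-)+(1-\theta^-)g'(u^-)$$ in each of the following two cases: (1) $\theta^-=1$, $\theta^+=0$ and $u^-\ge u^*$, where $(u^*,f(u^* ))$ is the unique point with $u^*>u^+$ at which a straight line through $(u^+,g(u^+))$ touches the graph of $f$ tangentially; (2) $\theta^-=0$, $\theta^+=1$ and $u^+\le v^*$, where $(v^*,f(v^* ))$ is the unique point with $v^*<u^-$ at which a straight line through $(u^-,g(u^-))$ touches the graph of $f$ tangentially.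
   Context: This concerns jumps of weak solutions of the conservation law $u_t+[\theta(u_x)f(u)+(1-\theta(u_x))g(u)]_x=0$, where $\theta(s)=1$ for $s>0$ and $\theta(s)=0$ for $s<0$. A jump connects a left state $(u^-,\theta^-)$ to a right state $(u^+,\theta^+)$, traveling with the Rankine–Hugoniot speed $\lambda$ given in the claim. *)

(* Defs.v *)
From Stdlib Require Import Reals.
Open Scope R_scope.

Definition C2_with (f f1 f2 : R -> R) : Prop :=
  (forall x, derivable_pt_lim f x (f1 x)) /\
  (forall x, derivable_pt_lim f1 x (f2 x)) /\
  (forall x, continuity_pt f2 x).

Definition flux (th : R) (f g : R -> R) (u : R) : R :=
  th * f u + (1 - th) * g u.

(* The straight line through (a, b) touches the graph of f (with derivative f1)
   tangentially at the point (p, f p): the tangent line of f at p passes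
   through (a, b). *)
Definition tangent_through (f f1 : R -> R) (a b p : R) : Prop :=
  b = f p + f1 p * (a - p).

(* Main.v *)
Require Import Defs.
From Stdlib Require Import Reals Lra Psatz.
Open Scope R_scope.
Lemma mono (F F' : R->R) a b : a <= b -> (forall c, a<=c<=b -> derivable_pt_lim F c (F' c)) -> (forall c, a<=c<=b -> 0 <= F' c) -> F a <= F b.
Proof.
  intros Hab HD HP. destruct (Req_dec a b) as [->|Hne]; [lra|].
  destruct (MVT_cor2 F F' a b) as [c [Hc1 Hc2]]; [lra|intros; apply HD; lra|].
  assert (0 <= F' c) by (apply HP; lra). nra.
Qed.
Lemma dh (f f1 f2 : R -> R) p x : derivable_pt_lim f x (f1 x) -> derivable_pt_lim f1 x (f2 x) ->
  derivable_pt_lim (fun y => f y - f1 y * (y - p)) x (- (f2 x * (x - p))).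
Proof.
  intros H1 H2.
  replace (- (f2 x * (x - p))) with (f1 x - (f2 x * (x - p) + f1 x * (1 - 0))) by ring.
  apply (derivable_pt_lim_minus f (fun y => f1 y * (y - p))); auto.
  apply (derivable_pt_lim_mult f1 (fun y => y - p)); auto.
  apply (derivable_pt_lim_minus id (fun _ => p)).
  apply derivable_pt_lim_id. apply derivable_pt_lim_const.
Qed.
Lemma tang (g g1 g2 : R -> R) a x : (forall y, derivable_pt_lim g y (g1 y)) -> (forall y, derivable_pt_lim g1 y (g2 y)) -> (forall y, 0 <= g2 y) ->
  g a + g1 a * (x - a) <= g x.
Proof.
  intros H1 H2 H3.
  assert (I : forall u v, u <= v -> g1 u <= g1 v) by (intros; apply (mono g1 g2); auto).
  destruct (Rtotal_order a x) as [H|[H|H]].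
  - destruct (MVT_cor2 g g1 a x) as [c [Hc1 Hc2]]; auto.
    assert (g1 a <= g1 c) by (apply I; lra). nra.
  - subst; lra.
  - destruct (MVT_cor2 g g1 x a) as [c [Hc1 Hc2]]; auto.
    assert (g1 c <= g1 a) by (apply I; lra). nra.
Qed.

Theorem lemma2p2 :
  forall (f f1 f2 g g1 g2 : R -> R) (c0 : R),
    C2_with f f1 f2 -> C2_with g g1 g2 ->
    0 < c0 ->
    (forall u, c0 <= f2 u) -> (forall u, c0 <= g2 u) ->
    (forall u, g u < f u) ->
    forall (um up thm thp : R),
      up < um ->
      (thm = 0 \/ thm = 1) -> (thp = 0 \/ thp = 1) -> thm <> thp ->
      let lam := (flux thp f g up - flux thm f g um) / (up - um) in
      (* case (1) *)
      (thm = 1 -> thp = 0 ->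
        forall us, up < us -> tangent_through f f1 up (g up) us ->
        us <= um ->
        flux thp f1 g1 up <= lam <= flux thm f1 g1 um) /\
      (* case (2) *)
      (thm = 0 -> thp = 1 ->
        forall vs, vs < um -> tangent_through f f1 um (g um) vs ->
        up <= vs ->
        flux thp f1 g1 up <= lam <= flux thm f1 g1 um).
Proof.
  intros f f1 f2 g g1 g2 c0 [Hf1 [Hf2 _]] [Hg1 [Hg2 _]] Hc0 Hfc Hgc Hfg um up thm thp Hud _ _ _ lam.
  assert (Hf2p : forall y, 0 <= f2 y) by (intro y; specialize (Hfc y); lra).
  assert (Hg2p : forall y, 0 <= g2 y) by (intro y; specialize (Hgc y); lra).
  split.
  - intros -> -> us Hus Ht Husm. unfold tangent_through in Ht.
    unfold lam, flux in *.
    set (L := (0 * f up + (1 - 0) * g up - (1 * f um + (1 - 1) * g um)) / (up - um)).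
    assert (HL : L * (um - up) = f um - g up) by (unfold L; field; lra).
    assert (A := tang g g1 g2 up um Hg1 Hg2 Hg2p).
    assert (Hfgum := Hfg um).
    assert (B : (fun y => - (f y - f1 y * (y - up))) us <= (fun y => - (f y - f1 y * (y - up))) um).
    { apply (mono (fun y => - (f y - f1 y * (y - up))) (fun x => f2 x * (x - up)) us um); [lra| |].
      - intros c Hc. replace (f2 c * (c - up)) with (- (- (f2 c * (c - up)))) by ring.
        apply (derivable_pt_lim_opp (fun y => f y - f1 y * (y - up))). apply dh; auto.
      - intros c Hc. specialize (Hf2p c). nra. }
    simpl in B. split; nra.
  - intros -> -> vs Hvs Ht Hvu. unfold tangent_through in Ht.
    unfold lam, flux in *.
    set (L := (1 * f up + (1 - 1) * g up - (0 * f um + (1 - 0) * g um)) / (up - um)).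
    assert (HL : L * (um - up) = g um - f up) by (unfold L; field; lra).
    assert (A := tang g g1 g2 um up Hg1 Hg2 Hg2p).
    assert (Hfgup := Hfg up).
    assert (B : (fun y => f y - f1 y * (y - um)) up <= (fun y => f y - f1 y * (y - um)) vs).
    { apply (mono (fun y => f y - f1 y * (y - um)) (fun x => - (f2 x * (x - um))) up vs); [lra| |].
      - intros c Hc. apply dh; auto.
      - intros c Hc. specialize (Hf2p c). nra. }
    simpl in B. split; nra.
Qed.
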